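(* Let $F=(\langle a_\alpha,b_\alpha,F_\alpha\rangle)_{\alpha\in A}$ be an ordinal sum of t-subnorms which is a t-norm, $f:[0,1]\to[0,1]$ strictly increasing with $B_A^f\ne\emptyset$, $\{f_\beta\}_{\beta\in B_A^f}$ the decomposition set of $f$, $T(x,y)=f^{(-1)}(F(f(x),f(y)))$, and for $\beta\in B_A^f$ and $x,y\in[s_\beta,t_\beta]$, $T^\beta(x,y)=f_\beta^{(-1)}(F^\beta(f_\beta(x),f_\beta(y)))$ and $\underline T^\beta(x,y)=f_\beta^{(-1)}(\underline F^\beta(f_\beta(x),f_\beta(y)))$, where $\underline F^\beta(x,y)=F^\beta(x,y)$ for $(x,y)\in[a_\beta,b_\beta)^2$ and $\underline F^\beta(x,y)=\min\{x,y\}$ for $(x,y)\in[a_\beta,b_\beta]^2\setminus[a_\beta,b_\beta)^2$. Let $\beta\in B_A^f$. (i) If $F_\beta$ is a t-norm, then $T(x,y)=T^\beta(x,y)$ for all $x,y\in[s_\beta,t_\beta]$ with $(x,y)\ne(s_\beta,s_\beta)$. (ii) If $F_\beta$ is a proper t-subnorm, then: (a) if $f(t_\beta)\le b_\beta$, $T(x,y)=T^\beta(x,y)$ for all $x,y\in[s_\beta,t_\beta]$ with $(x,y)\ne(s_\beta,s_\beta)$; (b) if $f(t_\beta)>b_\beta$, $T(x,y)=\underline T^\beta(x,y)$ for all $x,y\in[s_\beta,t_\beta]$ with $(x,y)\ne(s_\beta,s_\beta)$.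
   Context: A t-norm is a commutative, associative map $[0,1]^2\to[0,1]$, non-decreasing in each variable, with neutral element $1$; a t-subnorm is commutative, associative, non-decreasing with $G(x,y)\le\min\{x,y\}$; proper means not a t-norm. For a non-decreasing $g:[p,q]\to[u,v]$, $g^{(-1)}(y)=\sup\{x\in[p,q]:g(x)<y\}$ with $\sup\emptyset=p$. Ordinal sum of t-subnorms: $A\ne\emptyset$ totally ordered, $(a_\alpha,b_\alpha)$ pairwise disjoint non-empty open subintervals of $[0,1]$, $F_\alpha$ t-subnorms, and $F(x,y)=a_\alpha+(b_\alpha-a_\alpha)F_\alpha(\frac{x-a_\alpha}{b_\alpha-a_\alpha},\frac{y-a_\alpha}{b_\alpha-a_\alpha})$ if $(x,y)\in(a_\alpha,b_\alpha]^2$, $\min\{x,y\}$ otherwise; $F$ is assumed to be a t-norm. $F^\alpha(x,y)=a_\alpha+(b_\alpha-a_\alpha)F_\alpha(\frac{x-a_\alpha}{b_\alpha-a_\alpha},\frac{y-a_\alpha}{b_\alpha-a_\alpha})$ for $x,y\in[a_\alpha,b_\alpha]$. $s_\alpha=\inf\{x\in[0,1]:f(x)\ge a_\alpha\}$, $t_\alpha=\sup\{x\in[0,1]:f(x)\le b_\alpha\}$ ($\inf\emptyset=1,\sup\emptyset=0$); $B_A^f=\{\beta\in A:s_\beta<t_\beta\}$. Decomposition set: $f_\beta:[s_\beta,t_\beta]\to[a_\beta,b_\beta]$ with $f_\beta=f$ on $(s_\beta,t_\beta)$, $f_\beta(s_\beta)=f(s_\beta)$ if $f(s_\beta)\ge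 a_\beta$ else $a_\beta$, $f_\beta(t_\beta)=f(t_\beta)$ if $f(t_\beta)\le b_\beta$ else $b_\beta$. *)

(* Defs.v *)
From HB Require Import structures.
From mathcomp Require Import all_boot all_order all_algebra.
From mathcomp Require Import boolp classical_sets reals.
Set Implicit Arguments. Unset Strict Implicit. Unset Printing Implicit Defensive.
Import Order.TTheory GRing.Theory Num.Theory.
Local Open Scope ring_scope.
Local Open Scope classical_set_scope.

Section Defs.
Variable R : realType.

Definition inI (x : R) : Prop := 0 <= x <= 1.

Definition is_tnorm (T : R -> R -> R) : Prop :=
  [/\ (forall x y, inI x -> inI y -> inI (T x y)),
      (forall x y, inI x -> inI y -> T x y = T y x),
      (forall x y z, inI x -> inI y -> inI z -> T x (T y z) = T (T x y) z),
      ((forall x x' y, inI x -> inI x' -> inI y -> x <= x' -> T x y <= T x' y) /\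
       (forall x y y', inI x -> inI y -> inI y' -> y <= y' -> T x y <= T x y')) &
      (forall x, inI x -> T x 1 = x /\ T 1 x = x)].

Definition is_tsubnorm (T : R -> R -> R) : Prop :=
  [/\ (forall x y, inI x -> inI y -> inI (T x y)),
      (forall x y, inI x -> inI y -> T x y = T y x),
      (forall x y z, inI x -> inI y -> inI z -> T x (T y z) = T (T x y) z),
      ((forall x x' y, inI x -> inI x' -> inI y -> x <= x' -> T x y <= T x' y) /\
       (forall x y y', inI x -> inI y -> inI y' -> y <= y' -> T x y <= T x y')) &
      (forall x y, inI x -> inI y -> T x y <= Num.min x y)].

Definition scaled (a b : R) (G : R -> R -> R) (x y : R) : R :=
  a + (b - a) * G ((x - a) / (b - a)) ((y - a) / (b - a)).

Definition ordinal_sum_data (A : Type) (a b : A -> R)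
    (Fa : A -> R -> R -> R) : Prop :=
  [/\ inhabited A,
      (forall al, 0 <= a al /\ a al < b al /\ b al <= 1),
      (forall al be, al <> be -> b al <= a be \/ b be <= a al) &
      (forall al, is_tsubnorm (Fa al))].

Definition is_ordinal_sum (A : Type) (a b : A -> R)
    (Fa : A -> R -> R -> R) (F : R -> R -> R) : Prop :=
  ordinal_sum_data a b Fa /\
  forall x y, inI x -> inI y ->
    ((forall al, a al < x <= b al -> a al < y <= b al ->
        F x y = scaled (a al) (b al) (Fa al) x y) /\
     ((~ exists al, a al < x <= b al /\ a al < y <= b al) ->
        F x y = Num.min x y)).

Definition pseudo_inv (p q : R) (g : R -> R) (y : R) : R :=
  let S := [set x | p <= x <= q /\ g x < y] in
  if pselect (S = set0) then p else sup S.

Definition s_of (f : R -> R) (a : R) : R :=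
  let S := [set x | inI x /\ a <= f x] in
  if pselect (S = set0) then 1 else inf S.

Definition t_of (f : R -> R) (b : R) : R :=
  let S := [set x | inI x /\ f x <= b] in
  if pselect (S = set0) then 0 else sup S.

(* f_beta : [s_beta, t_beta] -> [a_beta, b_beta]  (values outside irrelevant) *)
Definition f_dec (f : R -> R) (a b : R) (x : R) : R :=
  let s := s_of f a in let t := t_of f b in
  if x == s then (if a <= f s then f s else a)
  else if x == t then (if f t <= b then f t else b)
  else f x.

Definition under_scaled (a b : R) (G : R -> R -> R) (x y : R) : R :=
  if (x < b) && (y < b) then scaled a b G x y else Num.min x y.

Definition Tgen (f : R -> R) (F : R -> R -> R) (x y : R) : R :=
  pseudo_inv 0 1 f (F (f x) (f y)).

Definition Tbeta (f : R -> R) (a b : R) (G : R -> R -> R) (x y : R) : R :=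
  let fb := f_dec f a b in
  pseudo_inv (s_of f a) (t_of f b) fb (scaled a b G (fb x) (fb y)).

Definition Tbeta_under (f : R -> R) (a b : R) (G : R -> R -> R) (x y : R) : R :=
  let fb := f_dec f a b in
  pseudo_inv (s_of f a) (t_of f b) fb (under_scaled a b G (fb x) (fb y)).

End Defs.

(* Main.v *)
Require Import Defs.
From HB Require Import structures.
From mathcomp Require Import all_boot all_order all_algebra.
From mathcomp Require Import boolp classical_sets reals.
Import Order.TTheory GRing.Theory Num.Theory.
Local Open Scope ring_scope.
Local Open Scope classical_set_scope.

Lemma ne0 {T : Type} {S : set T} : S <> set0 -> exists x, S x.
Proof.
move=> h; apply: contrapT => nh; apply: h; apply/seteqP; split=> x // Sx.
by apply: nh; exists x.
Qed.

Lemma key (R : realType) (g gb : R -> R) (s t c c' : R) :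
  0 <= s -> s < t -> t <= 1 ->
  (forall z, 0 <= z -> z < s -> g z < c') ->
  (forall z, 0 <= z <= 1 -> g z < c' -> z <= t) ->
  (forall z, s < z <= t -> (g z < c') = (gb z < c)) ->
  (gb s < c -> g s < c') ->
  pseudo_inv 0 1 g c' = pseudo_inv s t gb c.
Proof.
move=> s0 st t1 H1 H2 H3 H4; rewrite /pseudo_inv.
set S0 := [set x | _]; set Sb := [set x | _].
have SbS0 : forall w, Sb w -> S0 w.
  move=> w [/andP[sw wt] gw]; split.
    apply/andP; split; [exact: le_trans sw| exact: le_trans t1].
  have [ews|ws] := eqVneq w s; first by rewrite ews; apply: H4; rewrite -ews.
  by rewrite H3 // wt andbT lt_neqAle eq_sym ws.
have S0ub : has_ubound S0 by exists 1 => z [] /andP[].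
have Sbub : has_ubound Sb by exists t => z [] /andP[].
case: (pselect (S0 = set0)) => [S0e|S0n]; case: (pselect (Sb = set0)) => [Sbe|Sbn] /=.
- apply/eqP; rewrite eq_le s0 ?andbT; rewrite leNgt; apply/negP => s0p.
  have : S0 0 by split; [rewrite lexx ler01 | exact: H1 0 (lexx 0) s0p].
  by rewrite S0e.
- by case: (ne0 Sbn) => w0 /SbS0; rewrite S0e.
- case: (ne0 S0n) => z0 S0z0.
  have zS : forall z, S0 z -> z <= s.
    move=> z [/andP[zz0 z1] gz]; rewrite leNgt; apply/negP => sz.
    have : Sb z.
      split; first by rewrite (ltW sz) (H2 z) ?zz0 ?z1.
      by rewrite -H3 // sz (H2 z) ?zz0 ?z1.
    by rewrite Sbe.
  apply/eqP; rewrite eq_le; rewrite ge_sup //=; last by exists z0.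
  rewrite leNgt; apply/negP => lts.
  have sup0 : 0 <= sup S0.
    by apply: le_trans (ub_le_sup S0ub S0z0); case: S0z0 => /andP[].
  pose m := (sup S0 + s) / 2.
  have m1 : sup S0 < m by rewrite /m ltr_pdivlMr // mulrDr mulr1 ltrD2l.
  have m2 : m < s by rewrite /m ltr_pdivrMr // mulrDr mulr1 ltrD2r.
  have : S0 m.
    split; last by apply: H1 => //; exact: le_trans (ltW m1).
    by rewrite (le_trans sup0 (ltW m1)) /= (le_trans (ltW m2)) // (le_trans (ltW st)).
  by move/(ub_le_sup S0ub); rewrite leNgt m1.
- case: (ne0 S0n) => z0 S0z0; case: (ne0 Sbn) => w0 Sbw0.
  apply/eqP; rewrite eq_le; apply/andP; split.
    apply: ge_sup; first by exists z0.
    move=> z S0z; have [zs|sz] := leP z s.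
      apply: le_trans zs _; apply: le_trans (ub_le_sup Sbub Sbw0).
      by case: Sbw0 => /andP[].
    apply: ub_le_sup => //; case: S0z => /andP[zz0 z1] gz.
    split; first by rewrite (ltW sz) (H2 z) ?zz0 ?z1.
    by rewrite -H3 // sz (H2 z) ?zz0 ?z1.
  apply: ge_sup; first by exists w0.
  by move=> w /SbS0; apply: ub_le_sup.
Qed.
Section F.
Variables (R : realType) (f : R -> R).
Hypothesis mono : forall x y, inI x -> inI y -> x < y -> f x < f y.

Lemma s_ge0 a : 0 <= s_of f a.
Proof.
rewrite /s_of; case: pselect => [_|/ne0 [z Sz]] /=; first exact: ler01.
by apply: lb_le_inf; [exists z | move=> y [/andP[]]].
Qed.

Lemma s_le1 a : s_of f a <= 1.
Proof.
rewrite /s_of; case: pselect => [_|/ne0 [z Sz]] //=.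
apply: le_trans (ge_inf _ Sz) _; first by exists 0 => y [/andP[]].
by case: Sz => /andP[].
Qed.

Lemma t_ge0 b : 0 <= t_of f b.
Proof.
rewrite /t_of; case: pselect => [_|/ne0 [z Sz]] //=.
apply: le_trans (ub_le_sup _ Sz); first by case: Sz => /andP[].
by exists 1 => y [/andP[]].
Qed.

Lemma t_le1 b : t_of f b <= 1.
Proof.
rewrite /t_of; case: pselect => [_|/ne0 [z Sz]] /=; first exact: ler01.
by apply: ge_sup; [exists z | move=> y [/andP[]]].
Qed.

Lemma below_s a z : inI z -> z < s_of f a -> f z < a.
Proof.
move=> Iz; rewrite ltNge; apply: contraNT; rewrite -leNgt => az.
rewrite /s_of; case: pselect => [e|_] /=.
  have : [set x | inI x /\ a <= f x] z by [].
  by rewrite e.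
by apply: ge_inf => //; exists 0 => y [/andP[]].
Qed.

Lemma above_t b z : inI z -> t_of f b < z -> b < f z.
Proof.
move=> Iz; rewrite ltNge; apply: contraNT; rewrite -leNgt => zb.
rewrite /t_of; case: pselect => [e|_] /=.
  have : [set x | inI x /\ f x <= b] z by [].
  by rewrite e.
by apply: ub_le_sup => //; exists 1 => y [/andP[]].
Qed.

Lemma above_s a z : inI z -> s_of f a < z -> a < f z.
Proof.
move=> Iz; rewrite /s_of; case: pselect => [_|/ne0 [w Sw]] /=.
  by case/andP: Iz => _ z1 h; have := lt_le_trans h z1; rewrite ltxx.
move/inf_lt => /(_ (ex_intro _ w Sw)) [y [Iy ay] yz].
exact: le_lt_trans ay (mono _ _ Iy Iz yz).
Qed.

Lemma below_t b z : inI z -> z < t_of f b -> f z < b.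
Proof.
move=> Iz; rewrite /t_of; case: pselect => [_|/ne0 [w Sw]] /=.
  by case/andP: Iz => z0 _ h; have := le_lt_trans z0 h; rewrite ltxx.
move/sup_gt => /(_ (ex_intro _ w Sw)) [y [Iy yb] zy].
exact: lt_le_trans (mono _ _ Iz Iy zy) yb.
Qed.
End F.
Section Sc.
Variables (R : realType) (a b : R) (G : R -> R -> R).
Hypothesis ab : a < b.

Lemma norm01 {u} : a <= u <= b -> inI ((u - a) / (b - a)).
Proof.
case/andP=> au ub; have ba : 0 < b - a by rewrite subr_gt0.
rewrite /inI divr_ge0 ?subr_ge0 ?(ltW ba) ?(ltW ab) //=.
by rewrite ler_pdivrMr // mul1r lerD2r.
Qed.

Lemma sc_range u v : is_tsubnorm G -> a <= u <= b -> a <= v <= b ->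
  a <= scaled a b G u v <= b.
Proof.
case=> GI _ _ _ _ hu hv; have ba : 0 < b - a by rewrite subr_gt0.
have /andP[g0 g1] := GI _ _ (norm01 hu) (norm01 hv).
rewrite /scaled lerDl mulr_ge0 ?(ltW ba) //=.
by rewrite -lerBrDl ler_piMr // ltW.
Qed.

Lemma sc_a v : is_tsubnorm G -> a <= v <= b ->
  scaled a b G a v = a /\ scaled a b G v a = a.
Proof.
case=> GI _ _ _ Gmin hv.
have h0 : inI ((a - a) / (b - a)) by rewrite subrr mul0r /inI lexx ler01.
have e1 : G ((a - a) / (b - a)) ((v - a) / (b - a)) = 0.
  apply/eqP; rewrite eq_le; have /andP[-> _] := GI _ _ h0 (norm01 hv).
  rewrite andbT; apply: le_trans (Gmin _ _ h0 (norm01 hv)) _.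
  by rewrite subrr mul0r ge_min lexx.
have e2 : G ((v - a) / (b - a)) ((a - a) / (b - a)) = 0.
  apply/eqP; rewrite eq_le; have /andP[-> _] := GI _ _ (norm01 hv) h0.
  rewrite andbT; apply: le_trans (Gmin _ _ (norm01 hv) h0) _.
  by rewrite subrr mul0r ge_min lexx orbT.
by rewrite /scaled e1 e2 mulr0 addr0.
Qed.

Lemma sc_b u : is_tnorm G -> a <= u <= b ->
  scaled a b G u b = u /\ scaled a b G b u = u.
Proof.
case=> _ _ _ _ G1 hu; have ba : 0 < b - a by rewrite subr_gt0.
have e : (b - a) / (b - a) = 1 by rewrite divff // gt_eqF.
have [h1 h2] := G1 _ (norm01 hu).
rewrite /scaled e h1 h2 mulrC divfK ?gt_eqF // addrC subrK; split => //.
Qed.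
End Sc.
Section FS.
Variables (R : realType) (d : Order.disp_t) (A : orderType d)
    (a b : A -> R) (Fa : A -> R -> R -> R) (F : R -> R -> R) (beta : A).
Hypothesis HOS : is_ordinal_sum a b Fa F.

Lemma ab_of al : 0 <= a al /\ a al < b al /\ b al <= 1.
Proof. by case: HOS => -[]. Qed.

Lemma disj_of {al be} : al <> be -> b al <= a be \/ b be <= a al.
Proof. by case: HOS => -[_ _ h _] _; exact: h. Qed.

Lemma F_in u v : a beta < u <= b beta -> a beta < v <= b beta ->
  F u v = scaled (a beta) (b beta) (Fa beta) u v.
Proof.
move=> hu hv; have [a0 [ab b1]] := ab_of beta.
case: HOS => _ /(_ u v) []; last by move=> + _; apply.
- case/andP: hu => /ltW ?; rewrite /inI => h; rewrite (le_trans a0) // (le_trans h) //.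
- case/andP: hv => /ltW ?; rewrite /inI => h; rewrite (le_trans a0) // (le_trans h) //.
Qed.

Lemma F_min u v : inI u -> inI v ->
  (u <= a beta < v \/ u < b beta < v) -> F u v = u.
Proof.
move=> Iu Iv H; have [a0 [ab b1]] := ab_of beta.
case: HOS => _ /(_ u v Iu Iv) [_ ->]; last first.
  move=> [g [/andP[gu ug] /andP[gv vg]]].
  have [egb|ngb] := pselect (g = beta).
    subst g; case: H => /andP[h1 h2].
      by move: (le_lt_trans h1 gu); rewrite ltxx.
    by move: (le_lt_trans vg h2); rewrite ltxx.
  case: (disj_of ngb) => h.
    case: H => /andP[h1 h2].
      by move: (lt_le_trans (le_lt_trans (le_trans vg h) h2) (lexx _)); rewrite ltxx.
    by move: (lt_trans (le_lt_trans (le_trans vg h) ab) h2); rewrite ltxx.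
  case: H => /andP[h1 h2].
    by move: (lt_trans (le_lt_trans h1 (lt_le_trans ab h)) gu); rewrite ltxx.
  by move: (lt_trans (le_lt_trans h gu) h1); rewrite ltxx.
rewrite /Order.min; case: H => /andP[h1 h2]; first by rewrite (le_lt_trans h1 h2).
by rewrite (lt_trans h1 h2).
Qed.

Lemma F_high v : inI v -> b beta < v -> b beta <= F v v.
Proof.
move=> Iv bv; have [a0 [ab b1]] := ab_of beta.
case: HOS => _ /(_ v v Iv Iv) [H1 H2].
have [[g [/andP[gv vg] _]]|ne] := pselect (exists g, a g < v <= b g /\ a g < v <= b g).
  rewrite (H1 g) ?gv ?vg //.
  have [egb|ngb] := pselect (g = beta).
    by subst g; move: (lt_le_trans bv vg); rewrite ltxx.
  have bag : b beta <= a g.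
    case: (disj_of ngb) => // h.
    by move: (lt_le_trans (lt_le_trans (lt_trans ab bv) vg) h); rewrite ltxx.
  apply: le_trans bag _; rewrite /scaled lerDl mulr_ge0 ?subr_ge0 //.
    by case: (ab_of g) => _ [/ltW].
  have [_ [gb _]] := ab_of g.
  case: HOS => -[_ _ _ /(_ g) [GI _ _ _ _]].
  suff hI : inI ((v - a g) / (b g - a g)) by case/andP: (GI _ _ hI hI).
  have ba : 0 < b g - a g by rewrite subr_gt0.
  rewrite /inI divr_ge0 ?subr_ge0 ?(ltW ba) ?(ltW gv) //=.
  by rewrite ler_pdivrMr // mul1r lerD2r.
  exact: le_trans (ltW gv) vg.
by rewrite H2 // minxx ltW.
Qed.

Lemma tn_le (T : R -> R -> R) u v : is_tnorm T -> inI u -> inI v ->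
  T u v <= u /\ T u v <= v.
Proof.
case=> _ TC _ [_ Tm2] T1 Iu Iv.
have I1 : inI (1 : R) by rewrite /inI ler01 lexx.
have hv1 : v <= 1 by case/andP: Iv.
have hu1 : u <= 1 by case/andP: Iu.
split.
  have := Tm2 _ _ _ Iu Iv I1 hv1; by rewrite (T1 _ Iu).1.
rewrite TC //; have := Tm2 _ _ _ Iv Iu I1 hu1; by rewrite (T1 _ Iv).1.
Qed.
End FS.

Arguments s_ge0 {R f a}.
Arguments s_le1 {R f a}.
Arguments t_ge0 {R f b}.
Arguments t_le1 {R f b}.
Arguments below_s {R f a z}.
Arguments above_t {R f b z}.
Arguments below_t {R f} mono {b z}.
Arguments above_s {R f} mono {a z}.
Arguments tn_le {R T u v}.

Section Main.
Variables (R : realType) (f : R -> R) (F G : R -> R -> R) (aa bb : R).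
Hypothesis a0 : 0 <= aa.
Hypothesis ab : aa < bb.
Hypothesis b1 : bb <= 1.
Hypothesis HFin : forall u v, aa < u <= bb -> aa < v <= bb -> F u v = scaled aa bb G u v.
Hypothesis HFmin : forall u v, inI u -> inI v -> (u <= aa < v \/ u < bb < v) -> F u v = u.
Hypothesis HFhigh : forall v, inI v -> bb < v -> bb <= F v v.
Hypothesis HT : is_tnorm F.
Hypothesis Hf : forall x, inI x -> inI (f x).
Hypothesis mono : forall x y, inI x -> inI y -> x < y -> f x < f y.
Hypothesis Hst : s_of f aa < t_of f bb.

Lemma inI_st {z} : s_of f aa <= z <= t_of f bb -> inI z.
Proof.
case/andP=> h1 h2; rewrite /inI (le_trans s_ge0 h1) /=.
exact: le_trans h2 t_le1.
Qed.

Lemma Is : inI (s_of f aa).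
Proof. by apply: inI_st; rewrite lexx ltW. Qed.
Lemma It : inI (t_of f bb).
Proof. by apply: inI_st; rewrite lexx ltW. Qed.

Lemma fb_s : f_dec f aa bb (s_of f aa) = if aa <= f (s_of f aa) then f (s_of f aa) else aa.
Proof. by rewrite /f_dec /= eqxx. Qed.

Lemma fb_t : f_dec f aa bb (t_of f bb) = if f (t_of f bb) <= bb then f (t_of f bb) else bb.
Proof. by rewrite /f_dec /= (gt_eqF Hst) eqxx. Qed.

Lemma fb_int z : s_of f aa < z -> z < t_of f bb -> f_dec f aa bb z = f z.
Proof. by move=> h1 h2; rewrite /f_dec /= gt_eqF // lt_eqF. Qed.

Lemma fs_lt_b : f (s_of f aa) < bb.
Proof. exact: (below_t mono Is Hst). Qed.

Lemma classify {z} : s_of f aa <= z <= t_of f bb ->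
  [\/ z = s_of f aa /\ f (s_of f aa) < aa, z = t_of f bb /\ bb < f (t_of f bb) |
     [/\ f_dec f aa bb z = f z, aa <= f z <= bb, (f z = aa -> z = s_of f aa)
       & (f z < bb \/ f (t_of f bb) <= bb)]].
Proof.
move=> hz; have Iz := inI_st hz; case/andP: hz => sz zt.
have [ezs|nzs] := eqVneq z (s_of f aa).
  subst z; have [h|h] := ltP (f (s_of f aa)) aa; first by apply: Or31.
  apply: Or33; split => //; first by rewrite fb_s h.
    by rewrite ?h (ltW fs_lt_b).
  by left; exact: fs_lt_b.
have szl : s_of f aa < z by rewrite lt_neqAle eq_sym nzs sz.
have [ezt|nzt] := eqVneq z (t_of f bb).
  subst z; have [h|h] := ltP bb (f (t_of f bb)); first by apply: Or32.
  have ha := above_s mono Iz szl.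
  apply: Or33; split; first by rewrite fb_t h.
  - by rewrite ?h (ltW ha).
  - by move=> e; move: ha; rewrite e ltxx.
  - by right.
have ztl : z < t_of f bb by rewrite lt_neqAle nzt zt.
have ha := above_s mono Iz szl; have hb := below_t mono Iz ztl.
apply: Or33; split; first by rewrite fb_int.
- by rewrite (ltW ha) (ltW hb).
- by move=> e; move: ha; rewrite e ltxx.
- by left.
Qed.

Lemma fb_gt {z} : s_of f aa < z -> z <= t_of f bb -> aa < f_dec f aa bb z.
Proof.
move=> h1 h2; have hz : s_of f aa <= z <= t_of f bb by rewrite (ltW h1) h2.
case: (classify hz) => [[e _]|[-> htb]|[-> /andP[h3 _] h4 _]].
- by move: h1; rewrite e ltxx.
- by rewrite fb_t leNgt htb /=.
- rewrite lt_neqAle h3 andbT; apply/eqP => e; move: h1.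
  by rewrite (h4 (esym e)) ltxx.
Qed.

Lemma EqCase c : aa <= c <= bb ->
  pseudo_inv 0 1 f c = pseudo_inv (s_of f aa) (t_of f bb) (f_dec f aa bb) c.
Proof.
case/andP=> ac cb.
apply: key; rewrite ?s_ge0 ?t_le1 //.
- move=> z z0 zs; apply: lt_le_trans ac; apply: (below_s (f:=f)) => //.
  by rewrite /inI z0 (le_trans (ltW zs)) // s_le1.
- move=> z Iz fz; rewrite leNgt; apply/negP => tz.
  have := above_t Iz tz => h; have := lt_trans (le_lt_trans cb h) fz.
  by rewrite ltxx.
- move=> z /andP[sz zt]; have [ezt|nzt] := eqVneq z (t_of f bb).
    subst z; rewrite fb_t; case: ifP => // /negbT; rewrite -ltNge => h.
    by rewrite !ltNge cb (le_trans cb (ltW h)).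
  by rewrite fb_int // lt_neqAle nzt zt.
- rewrite fb_s; case: ifP => // /negbT; rewrite -ltNge => h _.
  exact: lt_le_trans h ac.
Qed.

Lemma LowCase : f (s_of f aa) < aa ->
  pseudo_inv 0 1 f (f (s_of f aa)) =
  pseudo_inv (s_of f aa) (t_of f bb) (f_dec f aa bb) aa.
Proof.
move=> hs; apply: key; rewrite ?s_ge0 ?t_le1 //.
- move=> z z0 zs; apply: (mono _ _ _ Is zs).
  by rewrite /inI z0 (le_trans (ltW zs)) // s_le1.
- move=> z Iz fz; apply: le_trans (ltW Hst); rewrite leNgt; apply/negP => sz.
  by move: (lt_trans fz (mono _ _ Is Iz sz)); rewrite ltxx.
- move=> z /andP[sz zt]; have Iz : inI z by apply: inI_st; rewrite (ltW sz) zt.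
  rewrite !ltNge (ltW (mono _ _ Is Iz sz)) (ltW (fb_gt sz zt)) //.
- by rewrite fb_s leNgt hs /= ltxx.
Qed.

Lemma HighCase c' : bb < f (t_of f bb) -> bb <= c' -> c' <= f (t_of f bb) ->
  pseudo_inv 0 1 f c' = pseudo_inv (s_of f aa) (t_of f bb) (f_dec f aa bb) bb.
Proof.
move=> ht bc ct; apply: key; rewrite ?s_ge0 ?t_le1 //.
- move=> z z0 zs; apply: lt_le_trans bc; apply: lt_trans ab.
  apply: (below_s (f:=f)) => //.
  by rewrite /inI z0 (le_trans (ltW zs)) // s_le1.
- move=> z Iz fz; rewrite leNgt; apply/negP => tz.
  by move: (lt_trans (lt_le_trans fz ct) (mono _ _ It Iz tz)); rewrite ltxx.
- move=> z /andP[sz zt]; have [ezt|nzt] := eqVneq z (t_of f bb).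
    subst z; rewrite fb_t leNgt ht /= ltxx.
    by rewrite ltNge ct.
  have ztl : z < t_of f bb by rewrite lt_neqAle nzt zt.
  have Iz : inI z by apply: inI_st; rewrite (ltW sz) zt.
  have h := below_t mono Iz ztl.
  by rewrite fb_int // h (lt_le_trans h bc).
- move=> _; exact: lt_le_trans fs_lt_b bc.
Qed.

Variable C : R -> R -> R.
Hypothesis P1 : forall u v, aa <= u <= bb -> aa <= v <= bb -> aa <= C u v <= bb.
Hypothesis P2 : forall v, aa <= v <= bb -> C aa v = aa /\ C v aa = aa.
Hypothesis P3 : forall u v, aa < u <= bb -> aa < v <= bb ->
  (u < bb \/ f (t_of f bb) <= bb) -> (v < bb \/ f (t_of f bb) <= bb) ->
  C u v = scaled aa bb G u v.
Hypothesis P4 : bb < f (t_of f bb) -> forall u, aa <= u <= bb -> C u bb = u /\ C bb u = u.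

Lemma main x y : s_of f aa <= x <= t_of f bb -> s_of f aa <= y <= t_of f bb ->
  (x, y) <> (s_of f aa, s_of f aa) ->
  Tgen f F x y = pseudo_inv (s_of f aa) (t_of f bb) (f_dec f aa bb)
                   (C (f_dec f aa bb x) (f_dec f aa bb y)).
Proof.
move=> hx hy nss; rewrite /Tgen.
have Ix := inI_st hx; have Iy := inI_st hy.
have abl : aa <= bb by exact: ltW.
have Hab : aa <= aa <= bb by rewrite lexx abl.
have Hbb : aa <= bb <= bb by rewrite lexx abl.
have FC : (forall u v, inI u -> inI v -> F u v = F v u) by case: HT.
have fIs := Hf _ Is; have fIt := Hf _ It; have fIx := Hf _ Ix; have fIy := Hf _ Iy.
case: (classify hx) => [[ex hsx]|[ex htx]|[ex rx nx bx]];
case: (classify hy) => [[ey hsy]|[ey hty]|[ey ry ny by_]].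
- by case: nss; rewrite ex ey.
- subst x y; rewrite fb_s leNgt hsx /= fb_t leNgt hty /= (P2 _ Hbb).1.
  rewrite (HFmin _ _ fIs fIt); first exact: LowCase.
  by left; rewrite (ltW hsx) (lt_trans ab hty).
- subst x; have ys : y <> s_of f aa by move=> e; case: nss; rewrite e.
  rewrite fb_s leNgt hsx /= ey (P2 _ ry).1.
  rewrite (HFmin _ _ fIs fIy); first exact: LowCase.
  left; rewrite (ltW hsx) lt_neqAle; case/andP: ry => -> _; rewrite andbT.
  by apply/eqP => e; apply: ys; apply: ny; rewrite e.
- subst x y; rewrite fb_s leNgt hsy /= fb_t leNgt htx /= (P2 _ Hbb).2.
  rewrite (FC _ _ fIt fIs) (HFmin _ _ fIs fIt); first exact: LowCase.
  by left; rewrite (ltW hsy) (lt_trans ab htx).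
- subst x y; rewrite fb_t leNgt htx /= (P4 htx _ Hbb).1.
  apply: HighCase => //; first exact: HFhigh _ fIt htx.
  by case: (tn_le HT fIt fIt).
- subst x; rewrite fb_t leNgt htx /= ey (P4 htx _ ry).2.
  have fyb : f y < bb by case: by_ => // h; move: (lt_le_trans htx h); rewrite ltxx.
  rewrite (FC _ _ fIt fIy) (HFmin _ _ fIy fIt); last by right; rewrite fyb htx.
  exact: EqCase.
- subst y; have xs : x <> s_of f aa by move=> e; case: nss; rewrite e.
  rewrite fb_s leNgt hsy /= ex (P2 _ rx).2.
  rewrite (FC _ _ fIx fIs) (HFmin _ _ fIs fIx); first exact: LowCase.
  left; rewrite (ltW hsy) lt_neqAle; case/andP: rx => -> _; rewrite andbT.
  by apply/eqP => e; apply: xs; apply: nx; rewrite e.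
- subst y; rewrite fb_t leNgt hty /= ex (P4 hty _ rx).1.
  have fxb : f x < bb by case: bx => // h; move: (lt_le_trans hty h); rewrite ltxx.
  rewrite (HFmin _ _ fIx fIt); last by right; rewrite fxb hty.
  exact: EqCase.
- rewrite ex ey.
  have [exa|nxa] := eqVneq (f x) aa.
    have ys : y <> s_of f aa by move=> e; case: nss; rewrite (nx exa) e.
    have ay : aa < f y.
      rewrite lt_neqAle; case/andP: ry => -> _; rewrite andbT.
      by apply/eqP => e; apply: ys; apply: ny; rewrite e.
    rewrite exa (P2 _ ry).1 -{1}exa (HFmin _ _ fIx fIy) exa; first exact: EqCase.
    by left; rewrite lexx ay.
  have [eya|nya] := eqVneq (f y) aa.
    rewrite eya (P2 _ rx).2 -{1}eya (FC _ _ fIx fIy) (HFmin _ _ fIy fIx) eya.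
      exact: EqCase.
    left; rewrite lexx lt_neqAle eq_sym nxa; by case/andP: rx.
  have ax : aa < f x <= bb by rewrite lt_neqAle eq_sym nxa; case/andP: rx => -> ->.
  have ay : aa < f y <= bb by rewrite lt_neqAle eq_sym nya; case/andP: ry => -> ->.
  rewrite (P3 _ _ ax ay bx by_) HFin //; apply: EqCase.
  by rewrite -(P3 _ _ ax ay bx by_); apply: P1.
Qed.
End Main.

Theorem proposition5p2 (R : realType) (d : Order.disp_t) (A : orderType d)
    (a b : A -> R) (Fa : A -> R -> R -> R) (F : R -> R -> R) (f : R -> R)
    (beta : A) :
  is_ordinal_sum a b Fa F ->
  is_tnorm F ->
  (forall x, inI x -> inI (f x)) ->
  (forall x y, inI x -> inI y -> x < y -> f x < f y) ->
  s_of f (a beta) < t_of f (b beta) ->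
  let s := s_of f (a beta) in
  let t := t_of f (b beta) in
  let inST := fun x => s <= x <= t in
  (is_tnorm (Fa beta) ->
     forall x y, inST x -> inST y -> (x, y) <> (s, s) ->
       Tgen f F x y = Tbeta f (a beta) (b beta) (Fa beta) x y) /\
  (~ is_tnorm (Fa beta) ->
     (f t <= b beta ->
        forall x y, inST x -> inST y -> (x, y) <> (s, s) ->
          Tgen f F x y = Tbeta f (a beta) (b beta) (Fa beta) x y) /\
     (b beta < f t ->
        forall x y, inST x -> inST y -> (x, y) <> (s, s) ->
          Tgen f F x y = Tbeta_under f (a beta) (b beta) (Fa beta) x y)).
Proof.
move=> HOS HT Hf mono Hst s t inST; rewrite /inST /s /t.
have [a0 [ab b1]] := @ab_of _ _ _ _ _ _ _ HOS beta.
have HG : is_tsubnorm (Fa beta) by case: HOS => -[_ _ _ h] _; exact: h.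
have HFin := @F_in _ _ _ _ _ _ _ beta HOS.
have HFmin := @F_min _ _ _ _ _ _ _ beta HOS.
have HFhigh := @F_high _ _ _ _ _ _ _ beta HOS.
have M := @main R f F (Fa beta) (a beta) (b beta) ab HFin HFmin HFhigh HT Hf mono Hst.
have P1 : forall u v, a beta <= u <= b beta -> a beta <= v <= b beta ->
    a beta <= scaled (a beta) (b beta) (Fa beta) u v <= b beta.
  by move=> u v hu hv; apply: sc_range.
have P2 : forall v, a beta <= v <= b beta ->
    scaled (a beta) (b beta) (Fa beta) (a beta) v = a beta /\
    scaled (a beta) (b beta) (Fa beta) v (a beta) = a beta.
  by move=> v hv; apply: sc_a.
split.
  move=> HGt x y hx hy nss; rewrite /Tbeta; apply: M => //.
  by move=> _ u hu; apply: sc_b.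
move=> nG; split.
  move=> ftb x y hx hy nss; rewrite /Tbeta; apply: M => //.
  by move=> h; move: (lt_le_trans h ftb); rewrite ltxx.
move=> bft x y hx hy nss; rewrite /Tbeta_under; apply: M => //.
- move=> u v hu hv; rewrite /under_scaled; case: ifP => _; first exact: P1.
  case/andP: hu => hu1 hu2; case/andP: hv => hv1 hv2.
  by rewrite le_min hu1 hv1 ge_min hu2.
- move=> v hv; rewrite /under_scaled; case/andP: hv => hv1 hv2; split.
    by case: ifP => _; [exact: (P2 _ (introT andP (conj hv1 hv2))).1 | rewrite min_l].
  by case: ifP => _; [exact: (P2 _ (introT andP (conj hv1 hv2))).2 | rewrite min_r].
- move=> u v hu hv bu bv.
  have nft : ~~ (f (t_of f (b beta)) <= b beta) by rewrite -ltNge.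
  case: bu => [bu|h]; last by rewrite h in nft.
  case: bv => [bv|h]; last by rewrite h in nft.
  by rewrite /under_scaled bu bv.
- move=> _ u /andP[hu1 hu2]; rewrite /under_scaled ltxx andbF /= min_l //.
  by rewrite min_r.
Qed.
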